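(* Let $U$ be a finite set of men and $W_1\subseteq W_2$ finite sets of women with $|W_1|\le|W_2|=|U|$, each man having a strict total order over $W_2$ and each woman a strict total order over $U$. Let $M_1,M_1'$ be stable matchings of $(U,W_1)$ such that $M_1'$ men-dominates $M_1$, and let $M_2$ be a stable matching of $(U,W_2)$. Define $M_2'$ as the union of: the pairs of $M_1'\cap M_2$; for each path component of $G(M_1',M_2)$, its edges belonging to $M_2$; for each cycle of $G(M_1',M_2)$ of Type I, its edges belonging to $M_2$; for each cycle of $G(M_1',M_2)$ of Type II, its edges belonging to $M_1'$. Then $|M_1'\setminus M_2'|\le |M_1\setminus M_2|$.
   Context: A matching is a set of man–woman pairs with each person in at most one pair; a blocking pair of $M$ is a pair $(u,w)\notin M$ with ($u$ unmatched or preferring $w$ to his partner) and ($w$ unmatched or preferring $u$ to her partner); a matching is stable if it has no blocking pair. Preferences in a sub-instance are restrictions of the given ones. $M$ men-dominates $M'$ if every man's partner in $M$ is at least as good for him as his partner in $M'$. The difference graph $G(M,M')$ has vertex set $U\cup W_2$ and edge set $M\triangle M'$. A cycle $C$ of $G(M_1',M_2)$ is of Type I if every man in $C$ strictly prefers his partner in $M_2$ to his partner in $M_1'$ and every woman in $C$ strictly prefers her partner in $M_1'$ to her partner in $M_2$; it is of Type II if every man in $C$ strictly prefers his partner in $M_1'$ to his partner in $M_2$ and every woman in $C$ strictly prefers her partner in $M_2$ to her partner in $M_1'$ (every cycle is of one of these types). *)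

(* Defs.v *)
From mathcomp Require Import all_boot.
Set Implicit Arguments. Unset Strict Implicit. Unset Printing Implicit Defensive.

Section Marriage.
Variables (Man Woman : finType).
(* Preferences as rank functions: smaller rank = more preferred.
   Injectivity of each rank function makes the induced order strict total. *)
Variable prefM : Man -> Woman -> nat.
Variable prefW : Woman -> Man -> nat.

Definition strict_prefs : Prop :=
  (forall u, injective (prefM u)) /\ (forall w, injective (prefW w)).

Definition mprefers u w w' := prefM u w < prefM u w'.
Definition wprefers w u u' := prefW w u < prefW w u'.

Implicit Types (M : {set Man * Woman}) (W : {set Woman}).

Definition is_matching M : Prop :=
  (forall u w w', (u, w) \in M -> (u, w') \in M -> w = w') /\
  (forall u u' w, (u, w) \in M -> (u', w) \in M -> u = u').

Definition matching_of W M : Prop :=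
  is_matching M /\ (forall p, p \in M -> p.2 \in W).

Definition blocking M u w : Prop :=
  (u, w) \notin M /\
  ((~ exists w', (u, w') \in M) \/ (exists w', (u, w') \in M /\ mprefers u w w')) /\
  ((~ exists u', (u', w) \in M) \/ (exists u', (u', w) \in M /\ wprefers w u u')).

Definition stable_of W M : Prop :=
  matching_of W M /\ (forall u w, w \in W -> ~ blocking M u w).

Definition men_dominates M M' : Prop :=
  forall u w', (u, w') \in M' -> exists2 w, (u, w) \in M & prefM u w <= prefM u w'.

Definition symdiff M M' := (M :\: M') :|: (M' :\: M).

Definition diff_edge M M' : rel (Man + Woman) := fun x y =>
  match x, y with
  | inl u, inr w => (u, w) \in symdiff M M'
  | inr w, inl u => (u, w) \in symdiff M M'
  | _, _ => false
  end.

Definition degree M M' (x : Man + Woman) := #|[set y | diff_edge M M' x y]|.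

Definition is_cycle_comp M M' (x : Man + Woman) : bool :=
  [forall y, connect (diff_edge M M') x y ==> (degree M M' y == 2)].

Definition typeI M1' M2 (x : Man + Woman) : bool :=
  [forall u, connect (diff_edge M1' M2) x (inl u) ==>
     [forall w1, forall w2, ((u, w1) \in M1') && ((u, w2) \in M2) ==>
        mprefers u w2 w1]] &&
  [forall w, connect (diff_edge M1' M2) x (inr w) ==>
     [forall u1, forall u2, ((u1, w) \in M1') && ((u2, w) \in M2) ==>
        wprefers w u1 u2]].

Definition typeII M1' M2 (x : Man + Woman) : bool :=
  [forall u, connect (diff_edge M1' M2) x (inl u) ==>
     [forall w1, forall w2, ((u, w1) \in M1') && ((u, w2) \in M2) ==>
        mprefers u w1 w2]] &&
  [forall w, connect (diff_edge M1' M2) x (inr w) ==>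
     [forall u1, forall u2, ((u1, w) \in M1') && ((u2, w) \in M2) ==>
        wprefers w u2 u1]].

(* M2' built from M1' and M2; the component of edge (u,w) is that of inl u *)
Definition M2' M1' M2 : {set Man * Woman} :=
  [set p | [|| (p \in M1') && (p \in M2),
              (p \in M2 :\: M1') && ~~ is_cycle_comp M1' M2 (inl p.1),
              [&& p \in M2 :\: M1', is_cycle_comp M1' M2 (inl p.1) & typeI M1' M2 (inl p.1)]
            | [&& p \in M1' :\: M2, is_cycle_comp M1' M2 (inl p.1) & typeII M1' M2 (inl p.1)]]].

End Marriage.

(* Main.v *)
Require Import Defs.
From mathcomp Require Import all_boot.
From Stdlib Require Import Classical.
Set Implicit Arguments. Unset Strict Implicit. Unset Printing Implicit Defensive.

Section H.
Variables (Man Woman : finType) (prefM : Man -> Woman -> nat) (prefW : Woman -> Man -> nat).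
Hypothesis sp : strict_prefs prefM prefW.

Lemma inj_fst (M : {set Man * Woman}) : is_matching M -> {in M &, injective (@fst Man Woman)}.
Proof. by move=> [h1 h2] [u w] [u' w'] /= H H' e; subst u'; rewrite (h1 _ _ _ H H'). Qed.
Lemma inj_snd (M : {set Man * Woman}) : is_matching M -> {in M &, injective (@snd Man Woman)}.
Proof. by move=> [h1 h2] [u w] [u' w'] /= H H' e; subst w'; rewrite (h2 _ _ _ H H'). Qed.

Lemma perfect (M2 : {set Man * Woman}) : #|Woman| = #|Man| ->
  stable_of prefM prefW setT M2 -> forall u, exists w, (u,w) \in M2.
Proof.
move=> hc [[hm hW] hst] u; apply: NNPP => hu.
have uS : u \notin [set p.1 | p in M2].
  by apply/negP => /imsetP [[u' w] H /= e]; subst u'; apply: hu; exists w.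
have hlt : #|[set p.1 | p in M2]| < #|Man|.
  rewrite -cardsT; apply: proper_card; rewrite properT; apply/negP => /eqP e.
  by move: uS; rewrite e inE.
have [w hw] : exists w, w \notin [set p.2 | p in M2].
  case/boolP: [exists w, w \notin [set p.2 | p in M2]] => [/existsP//|/existsPn H].
  have e : [set p.2 | p in M2] = setT by apply/setP => w; rewrite inE; move: (H w); rewrite negbK.
  move: hlt; rewrite (card_in_imset (inj_fst hm)) -(card_in_imset (inj_snd hm)) e cardsT hc ltnn.
  by [].
apply: (hst u w (in_setT w)); split; last split.
- by apply/negP => h; apply: hu; exists w.
- by left.
- left => -[u' h]; move/negP: hw; apply; apply/imsetP; by exists (u', w).
Qed.

Section P.
Variables (W1 : {set Woman}) (M1' M2 : {set Man * Woman}).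
Hypothesis hs1 : stable_of prefM prefW W1 M1'.
Hypothesis hs2 : stable_of prefM prefW setT M2.
Hypothesis hperf : forall u, exists w, (u,w) \in M2.

Definition Pm := [set u | [exists w1, exists w2, [&& (u,w1) \in M1', (u,w2) \in M2 & prefM u w1 < prefM u w2]]].
Definition Pw := [set w | [exists u1, exists u2, [&& (u1,w) \in M1', (u2,w) \in M2 & prefW w u2 < prefW w u1]]].

Lemma fwd_m u w1 w2 : (u,w1) \in M1' -> (u,w2) \in M2 -> prefM u w1 < prefM u w2 -> w1 \in Pw.
Proof.
move: hs2 => [[hm hW] hst] h1 h2 lt.
have ne : w1 != w2 by apply/eqP => e; subst; rewrite ltnn in lt.
have n2 : (u,w1) \notin M2.
  by apply/negP=> h; move/eqP: ne; apply; exact: (hm.1 _ _ _ h h2).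
have [u' [hu' nlt]] : exists u', (u',w1) \in M2 /\ ~ wprefers prefW w1 u u'.
  apply: NNPP => H; apply: (hst u w1 (in_setT _)); split=>//; split.
    by right; exists w2.
  case: (classic (exists u', (u',w1) \in M2)) => [[u' hu']|nex]; last by left.
  right; exists u'; split=>//; apply: NNPP => nw; apply: H; by exists u'.
have neu : u' != u by apply/eqP => e; subst; rewrite hu' in n2.
rewrite inE; apply/existsP; exists u; apply/existsP; exists u'; rewrite h1 hu' /=.
rewrite ltn_neqAle; apply/andP; split.
  by apply/eqP => e; apply: (negP neu); apply/eqP; by move: sp => [_ /(_ w1) I]; exact: I e.
by rewrite leqNgt; apply/negP.
Qed.

Lemma fwd_w w u1 u2 : (u1,w) \in M1' -> (u2,w) \in M2 -> prefW w u2 < prefW w u1 -> u2 \in Pm.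
Proof.
move: hs1 => [[hm hW] hst] h1 h2 lt.
have ne : u1 != u2 by apply/eqP => e; subst; rewrite ltnn in lt.
have n2 : (u2,w) \notin M1'.
  by apply/negP=> h; move/eqP: ne; apply; exact: (hm.2 _ _ _ h1 h).
have wW : w \in W1 by exact: (hW _ h1).
have [w' [hw' nlt]] : exists w', (u2,w') \in M1' /\ ~ mprefers prefM u2 w w'.
  apply: NNPP => H; apply: (hst u2 w wW); split=>//; split; last by right; exists u1.
  case: (classic (exists w', (u2,w') \in M1')) => [[w' hw']|nex]; last by left.
  right; exists w'; split=>//; apply: NNPP => nw; apply: H; by exists w'.
have new : w' != w by apply/eqP => e; subst; rewrite hw' in n2.
rewrite inE; apply/existsP; exists w'; apply/existsP; exists w; rewrite hw' h2 /=.
rewrite ltn_neqAle; apply/andP; split.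
  by apply/eqP => e; apply: (negP new); apply/eqP; by move: sp => [/(_ u2) I _]; exact: I e.
by rewrite leqNgt; apply/negP.
Qed.


Lemma backs : (forall u, u \in Pm -> exists2 w, (u,w) \in M2 & w \in Pw) /\
              (forall w, w \in Pw -> exists2 u, (u,w) \in M1' & u \in Pm).
Proof.
have m1 := hs1.1.1; have m2 := hs2.1.1.
set E1 := [set p in M1' | p.1 \in Pm]; set E2 := [set p in M2 | p.2 \in Pw].
have s1 : Pm \subset [set p.1 | p in E1].
  apply/subsetP => u hu; have := hu; rewrite inE => /existsP[w1 /existsP[w2 /and3P[h1 h2 lt]]].
  by apply/imsetP; exists (u,w1) => //; rewrite inE h1.
have t1 : [set p.2 | p in E1] \subset Pw.
  apply/subsetP => w /imsetP[[u w'] /setIdP[hp hu] ->] /=.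
  move: hu; rewrite inE => /existsP[w1 /existsP[w2 /and3P[h1 h2 lt]]].
  have e : w1 = w' by exact: (m1.1 _ _ _ h1 hp).
  subst; exact: (fwd_m h1 h2 lt).
have s2 : Pw \subset [set p.2 | p in E2].
  apply/subsetP => w hw; have := hw; rewrite inE => /existsP[u1 /existsP[u2 /and3P[h1 h2 lt]]].
  by apply/imsetP; exists (u2,w) => //; rewrite inE h2.
have t2 : [set p.1 | p in E2] \subset Pm.
  apply/subsetP => u /imsetP[[u' w] /setIdP[hp hw] ->] /=.
  move: hw; rewrite inE => /existsP[u1 /existsP[u2 /and3P[h1 h2 lt]]].
  have e : u2 = u' by exact: (m2.2 _ _ _ h2 hp).
  subst; exact: (fwd_w h1 h2 lt).
have i1f : {in E1 &, injective (@fst Man Woman)}.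
  by move=> p q /setIdP[hp _] /setIdP[hq _]; exact: (inj_fst m1 hp hq).
have i1s : {in E1 &, injective (@snd Man Woman)}.
  by move=> p q /setIdP[hp _] /setIdP[hq _]; exact: (inj_snd m1 hp hq).
have i2f : {in E2 &, injective (@fst Man Woman)}.
  by move=> p q /setIdP[hp _] /setIdP[hq _]; exact: (inj_fst m2 hp hq).
have i2s : {in E2 &, injective (@snd Man Woman)}.
  by move=> p q /setIdP[hp _] /setIdP[hq _]; exact: (inj_snd m2 hp hq).
have c1 := subset_leq_card s1; have c2 := subset_leq_card t1.
have c3 := subset_leq_card s2; have c4 := subset_leq_card t2.
rewrite (card_in_imset i1f) in c1; rewrite (card_in_imset i1s) in c2.
rewrite (card_in_imset i2s) in c3; rewrite (card_in_imset i2f) in c4.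
have e1 : [set p.2 | p in E1] = Pw.
  apply/eqP; rewrite eqEcard t1 /=; rewrite (card_in_imset i1s).
  exact: leq_trans c3 (leq_trans c4 c1).
have e2 : [set p.1 | p in E2] = Pm.
  apply/eqP; rewrite eqEcard t2 /=; rewrite (card_in_imset i2f).
  exact: leq_trans c1 (leq_trans c2 c3).
split.
  move=> u; rewrite -e2 => /imsetP[[u' w] /setIdP[hp hw] ->] /=; by exists w.
move=> w; rewrite -e1 => /imsetP[[u w'] /setIdP[hp hu] ->] /=; by exists u.
Qed.


Definition PS : pred (Man + Woman) := fun x =>
  match x with inl u => u \in Pm | inr w => w \in Pw end.

Lemma Pstep x y : diff_edge M1' M2 x y -> PS x -> PS y.
Proof.
have m1 := hs1.1.1; have m2 := hs2.1.1.
case: x => [u|w]; case: y => [u'|w'] //= hE hP;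
  rewrite /symdiff !inE in hE; case/orP: hE => /andP[_ h].
- have := hP; rewrite inE => /existsP[w1 /existsP[w2 /and3P[h1 h2 lt]]].
  have e : w' = w1 by exact: (m1.1 _ _ _ h h1).
  subst; exact: (fwd_m h1 h2 lt).
- have [w2 h2 hw2] := backs.1 u hP.
  have e : w' = w2 by exact: (m2.1 _ _ _ h h2).
  by subst.
- have [u1 h1 hu1] := backs.2 w hP.
  have e : u' = u1 by exact: (m1.2 _ _ _ h h1).
  by subst.
- have := hP; rewrite inE => /existsP[u1 /existsP[u2 /and3P[h1 h2 lt]]].
  have e : u' = u2 by exact: (m2.2 _ _ _ h h2).
  subst; exact: (fwd_w h1 h2 lt).
Qed.

Lemma Pconnect x y : connect (diff_edge M1' M2) x y -> PS x -> PS y.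
Proof.
move/connectP => [p hp ->]; elim: p x hp => [|z p IH] x //= /andP[e hp] hx.
exact: IH _ hp (Pstep e hx).
Qed.

Lemma Pdeg x : PS x -> degree M1' M2 x = 2.
Proof.
have m1 := hs1.1.1; have m2 := hs2.1.1.
case: x => [u|w] /= hP; rewrite /degree.
- have := hP; rewrite inE => /existsP[w1 /existsP[w2 /and3P[h1 h2 lt]]].
  have ne : w1 != w2 by apply/eqP => e; subst; rewrite ltnn in lt.
  have n1 : (u,w1) \notin M2.
    by apply/negP => h; apply: (negP ne); apply/eqP; exact: (m2.1 _ _ _ h h2).
  have n2 : (u,w2) \notin M1'.
    by apply/negP => h; apply: (negP ne); apply/eqP; exact: (m1.1 _ _ _ h1 h).
  have -> : [set y | diff_edge M1' M2 (inl u) y] = [set inr w1; inr w2].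
    apply/setP => -[u'|w]; rewrite !inE //=.
    apply/idP/idP.
      rewrite /symdiff !inE; case/orP => /andP[_ h].
        by rewrite (m1.1 _ _ _ h h1) eqxx.
      by rewrite (m2.1 _ _ _ h h2) eqxx orbT.
    by case/orP => /eqP[->]; rewrite /symdiff !inE ?h1 ?h2 ?n1 ?n2 ?orbT.
  rewrite cards2; suff -> : (inr w1 != inr w2 :> Man + Woman) by [].
  by apply/eqP => -[e]; rewrite e eqxx in ne.
- have := hP; rewrite inE => /existsP[u1 /existsP[u2 /and3P[h1 h2 lt]]].
  have ne : u1 != u2 by apply/eqP => e; subst; rewrite ltnn in lt.
  have n1 : (u1,w) \notin M2.
    by apply/negP => h; apply: (negP ne); apply/eqP; exact: (m2.2 _ _ _ h h2).
  have n2 : (u2,w) \notin M1'.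
    by apply/negP => h; apply: (negP ne); apply/eqP; exact: (m1.2 _ _ _ h1 h).
  have -> : [set y | diff_edge M1' M2 (inr w) y] = [set inl u1; inl u2].
    apply/setP => -[u|w']; rewrite !inE //=.
    apply/idP/idP.
      rewrite /symdiff !inE; case/orP => /andP[_ h].
        by rewrite (m1.2 _ _ _ h h1) eqxx.
      by rewrite (m2.2 _ _ _ h h2) eqxx orbT.
    by case/orP => /eqP[->]; rewrite /symdiff !inE ?h1 ?h2 ?n1 ?n2 ?orbT.
  rewrite cards2; suff -> : (inl u1 != inl u2 :> Man + Woman) by [].
  by apply/eqP => -[e]; rewrite e eqxx in ne.
Qed.


Lemma Pcycle u : u \in Pm ->
  is_cycle_comp M1' M2 (inl u) && typeII prefM prefW M1' M2 (inl u).
Proof.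
have m1 := hs1.1.1; have m2 := hs2.1.1.
move=> hu; have hx : PS (inl u) := hu.
apply/andP; split.
  apply/forallP => y; apply/implyP => c; rewrite Pdeg //; exact: Pconnect c hx.
apply/andP; split.
  apply/forallP => v; apply/implyP => c.
  have := Pconnect c hx; rewrite /= inE => /existsP[w1 /existsP[w2 /and3P[h1 h2 lt]]].
  apply/forallP => a; apply/forallP => b; apply/implyP => /andP[ha hb].
  by rewrite (m1.1 _ _ _ ha h1) (m2.1 _ _ _ hb h2).
apply/forallP => v; apply/implyP => c.
have := Pconnect c hx; rewrite /= inE => /existsP[u1 /existsP[u2 /and3P[h1 h2 lt]]].
apply/forallP => a; apply/forallP => b; apply/implyP => /andP[ha hb].
by rewrite (m1.2 _ _ _ ha h1) (m2.2 _ _ _ hb h2).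
Qed.

End P.

Lemma rural (W1 : {set Woman}) (M1 M1' : {set Man * Woman}) :
  stable_of prefM prefW W1 M1 -> stable_of prefM prefW W1 M1' ->
  men_dominates prefM M1' M1 ->
  forall u w, (u,w) \in M1' -> exists w0, (u,w0) \in M1.
Proof.
move=> [[m1 hW1] st1] [[m1' hW1'] st1'] dom.
have sub_m : [set p.1 | p in M1] \subset [set p.1 | p in M1'].
  apply/subsetP => _ /imsetP[[u w] h ->] /=.
  have [w' h' _] := dom u w h; by apply/imsetP; exists (u,w').
have sub_w : [set p.2 | p in M1'] \subset [set p.2 | p in M1].
  apply/subsetP => _ /imsetP[[u w] h ->] /=.
  case/boolP: ((u,w) \in M1) => hin; first by apply/imsetP; exists (u,w).
  apply/imsetP; apply: NNPP => nex.
  apply: (st1 u w (hW1' _ h)); split=>//; split.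
    case: (classic (exists w', (u,w') \in M1)) => [[w0 h0]|n]; last by left.
    right; exists w0; split=>//.
    have [w' hw' le] := dom u w0 h0.
    have e : w' = w by exact: (m1'.1 _ _ _ hw' h).
    subst w'; rewrite /mprefers ltn_neqAle le andbT.
    apply/eqP => e; move: sp => [/(_ u) I _]; have := I _ _ e => e'; subst w0.
    by rewrite h0 in hin.
  left => -[u' hu']; apply: nex; by exists (u',w).
have c1 := subset_leq_card sub_m; have c2 := subset_leq_card sub_w.
rewrite (card_in_imset (inj_fst m1)) (card_in_imset (inj_fst m1')) in c1.
rewrite (card_in_imset (inj_snd m1)) (card_in_imset (inj_snd m1')) in c2.
have e : [set p.1 | p in M1] = [set p.1 | p in M1'].
  apply/eqP; rewrite eqEcard sub_m /=.
  by rewrite (card_in_imset (inj_fst m1)) (card_in_imset (inj_fst m1')).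
move=> u w h.
have : u \in [set p.1 | p in M1'] by apply/imsetP; exists (u,w).
rewrite -e => /imsetP[[u' w0] h0 /= ->]; by exists w0.
Qed.

End H.

Theorem lemma3 (Man Woman : finType)
  (prefM : Man -> Woman -> nat) (prefW : Woman -> Man -> nat)
  (W1 : {set Woman}) (M1 M1' M2 : {set Man * Woman}) :
  strict_prefs prefM prefW ->
  #|Woman| = #|Man| ->
  stable_of prefM prefW W1 M1 ->
  stable_of prefM prefW W1 M1' ->
  men_dominates prefM M1' M1 ->
  stable_of prefM prefW [set: Woman] M2 ->
  #|M1' :\: M2' prefM prefW M1' M2| <= #|M1 :\: M2|.
Proof.
move=> sp hc hs1 hs1' dom hs2.
have hperf := perfect hc hs2.
have m1' := hs1'.1.1; have m2 := hs2.1.1.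
set A := M1' :\: _.
have key : forall u w, (u,w) \in A ->
    (u,w) \in M1' /\ exists2 w2, (u,w2) \in M2 & prefM u w2 < prefM u w.
  move=> u w /setDP[hp1 hn]; split=>//.
  have n2 : (u,w) \notin M2.
    by apply/negP => h; move/negP: hn; apply; rewrite /M2' inE hp1 h.
  have [w2 h2] := hperf u.
  exists w2 => //.
  case: (ltngtP (prefM u w2) (prefM u w)) => // [lt|e].
  - have hu : u \in Pm prefM M1' M2.
      by rewrite inE; apply/existsP; exists w; apply/existsP; exists w2; rewrite hp1 h2 lt.
    have /andP[cy t2] := Pcycle sp hs1' hs2 hu.
    exfalso; move/negP: hn; apply; rewrite /M2' inE /= !inE hp1 n2 cy t2 /=.
    by rewrite !orbT.
  - move: sp => [/(_ u) I _]; have := I _ _ e => e'; subst w2.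
    by rewrite h2 in n2.
have iA : {in A &, injective (@fst Man Woman)}.
  by move=> p q /setDP[hp _] /setDP[hq _]; exact: (inj_fst m1' hp hq).
rewrite -(card_in_imset iA).
apply: leq_trans (leq_imset_card (@fst Man Woman) _).
apply: subset_leq_card; apply/subsetP => _ /imsetP[[u w] hA ->] /=.
have [h1 [w2 h2 lt]] := key u w hA.
have [w0 h0] := rural sp hs1 hs1' dom h1.
have [w' hw' le] := dom u w0 h0.
have e : w' = w by exact: (m1'.1 _ _ _ hw' h1).
subst w'.
apply/imsetP; exists (u,w0) => //; rewrite inE h0 andbT.
apply/negP => h; have e := m2.1 _ _ _ h h2; subst w0.
by move: (leq_ltn_trans le lt); rewrite ltnn.
Qed.
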